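(* Let $(V,E)$ be a finite graph (multiple edges allowed, no self-loops) whose vertex set is a disjoint union $V=V_\partial\sqcup V_b$, and let $V_\partial=A\sqcup B\sqcup C$. Consider configurations $\{\pi_v\}_{v\in V}$ with $\pi_v\in S_4$, subject to the boundary conditions $\pi_v=\pi^{(1)}=(12)(34)$ for $v\in A$, $\pi_v=\pi^{(2)}=(13)(24)$ for $v\in B$, and $\pi_v=\mathrm{id}$ for $v\in C$, with energy $E(\{\pi_v\})=\sum_{e=(vw)\in E}d(\pi_v,\pi_w)$. Then every such configuration satisfies $E(\{\pi_v\})\ge 2m$, where $m$ is the minimal size $|\gamma_{ABC}|$ of a tripartition for $A,B,C$. If moreover the minimal tripartition $(\Gamma_A,\Gamma_B,\Gamma_C)$ is unique, then equality $E(\{\pi_v\})=2m$ holds if and only if $\pi_v=\pi^{(1)}$ for all $v\in\Gamma_A$, $\pi_v=\pi^{(2)}$ for all $v\in\Gamma_B$, and $\pi_v=\mathrm{id}$ for all $v\in\Gamma_C$.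
   Context: The Cayley distance on $S_n$ is $d(\pi,\sigma)=n-|C(\pi^{-1}\sigma)|$, where $|C(\tau)|$ is the number of disjoint cycles of $\tau$ including fixed points. A tripartition for $A,B,C$ is a partition $V=\Gamma_A\sqcup\Gamma_B\sqcup\Gamma_C$ with $V_\partial\cap\Gamma_A=A$, $V_\partial\cap\Gamma_B=B$, $V_\partial\cap\Gamma_C=C$; its edge set $\gamma_{ABC}$ is the set of edges of $E$ whose endpoints lie in two different parts, and its size is $|\gamma_{ABC}|$. A tripartition is minimal if $|\gamma_{ABC}|$ is minimal among all tripartitions for $A,B,C$. *)

(* Defs.v *)
From mathcomp Require Import all_boot all_fingroup.
Set Implicit Arguments. Unset Strict Implicit. Unset Printing Implicit Defensive.
Local Open Scope group_scope.

Definition cayley_dist (p s : 'S_4) : nat := (4 - #|porbits (p^-1 * s)|)%N.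

(* (12)(34) and (13)(24), written on {0,1,2,3} = 'I_4 (point k+1 is ordinal k). *)
Definition pi1 : 'S_4 :=
  tperm (inord 0 : 'I_4) (inord 1) * tperm (inord 2 : 'I_4) (inord 3).
Definition pi2 : 'S_4 :=
  tperm (inord 0 : 'I_4) (inord 2) * tperm (inord 1 : 'I_4) (inord 3).

Section Graph.
Variables (V Edg : finType) (src tgt : Edg -> V).

Definition energy (pi : V -> 'S_4) : nat :=
  \sum_(e : Edg) cayley_dist (pi (src e)) (pi (tgt e)).

Definition is_tripartition (A B C GA GB GC : {set V}) : Prop :=
  [/\ [disjoint GA & GB], [disjoint GA & GC], [disjoint GB & GC],
      GA :|: GB :|: GC = [set: V] &
      [/\ (A :|: B :|: C) :&: GA = A, (A :|: B :|: C) :&: GB = B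
        & (A :|: B :|: C) :&: GC = C]].

Definition cut_edges (GA GB GC : {set V}) : {set Edg} :=
  [set e | ~~ [|| (src e \in GA) && (tgt e \in GA),
                 (src e \in GB) && (tgt e \in GB)
               | (src e \in GC) && (tgt e \in GC)]].

Definition cut_size (GA GB GC : {set V}) : nat := #|cut_edges GA GB GC|.

Definition minimal_tripartition (A B C GA GB GC : {set V}) : Prop :=
  is_tripartition A B C GA GB GC /\
  forall GA' GB' GC', is_tripartition A B C GA' GB' GC' ->
    cut_size GA GB GC <= cut_size GA' GB' GC'.
End Graph.

(* Main.v *)
Require Import Defs.
From mathcomp Require Import all_boot all_fingroup.
Set Implicit Arguments. Unset Strict Implicit. Unset Printing Implicit Defensive.


Definition code (s : 'S_4) : seq nat := [seq val (s (inord a : 'I_4)) | a <- iota 0 4].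
Definition codeMul (c1 c2 : seq nat) : seq nat := [seq nth 0 c2 (nth 0 c1 a) | a <- iota 0 4].
Definition iterL (i : nat) (c : seq nat) (x : nat) := iter i (fun y => nth 0 c y) x.
Definition cntL (c : seq nat) : nat :=
  count (fun x => all (fun i => x <= iterL i c x) (iota 0 4)) (iota 0 4).
Definition codes24 := permutations (iota 0 4).
Definition tabCodes : seq (seq nat) := [:: [:: 0; 1; 2; 3];
  [:: 0; 1; 3; 2];
  [:: 0; 2; 1; 3];
  [:: 0; 2; 3; 1];
  [:: 0; 3; 1; 2];
  [:: 0; 3; 2; 1];
  [:: 1; 0; 2; 3];
  [:: 1; 0; 3; 2];
  [:: 1; 2; 0; 3];
  [:: 1; 2; 3; 0];
  [:: 1; 3; 0; 2];
  [:: 1; 3; 2; 0];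
  [:: 2; 0; 1; 3];
  [:: 2; 0; 3; 1];
  [:: 2; 1; 0; 3];
  [:: 2; 1; 3; 0];
  [:: 2; 3; 0; 1];
  [:: 2; 3; 1; 0];
  [:: 3; 0; 1; 2];
  [:: 3; 0; 2; 1];
  [:: 3; 1; 0; 2];
  [:: 3; 1; 2; 0];
  [:: 3; 2; 0; 1];
  [:: 3; 2; 1; 0]].
Definition tabLabs : seq (seq nat) := [:: [:: 2; 2; 2; 2; 2; 2; 2; 2; 2; 2; 2; 2];
  [:: 2; 2; 2; 2; 2; 2; 0; 0; 0; 0; 0; 0];
  [:: 2; 2; 2; 2; 2; 1; 2; 0; 0; 0; 1; 1];
  [:: 2; 2; 2; 2; 1; 1; 0; 0; 0; 0; 1; 1];
  [:: 2; 2; 2; 2; 1; 1; 0; 0; 0; 0; 1; 1];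
  [:: 2; 2; 2; 2; 1; 1; 2; 2; 1; 1; 1; 1];
  [:: 2; 2; 2; 2; 2; 2; 0; 0; 0; 0; 0; 0];
  [:: 0; 0; 0; 0; 0; 0; 0; 0; 0; 0; 0; 0];
  [:: 2; 2; 2; 2; 1; 1; 0; 0; 0; 0; 1; 1];
  [:: 2; 2; 2; 0; 1; 1; 0; 0; 0; 0; 0; 1];
  [:: 0; 1; 1; 0; 1; 1; 0; 0; 0; 0; 1; 1];
  [:: 2; 2; 2; 2; 1; 1; 0; 0; 0; 0; 1; 1];
  [:: 2; 2; 2; 2; 1; 1; 0; 0; 0; 0; 1; 1];
  [:: 0; 1; 1; 0; 1; 1; 0; 0; 0; 0; 1; 1];
  [:: 2; 2; 2; 2; 1; 1; 2; 2; 1; 1; 1; 1];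
  [:: 2; 2; 2; 2; 1; 1; 0; 0; 0; 0; 1; 1];
  [:: 1; 1; 1; 1; 1; 1; 1; 1; 1; 1; 1; 1];
  [:: 2; 2; 1; 2; 1; 1; 0; 0; 0; 1; 1; 1];
  [:: 0; 2; 2; 2; 1; 1; 0; 0; 0; 0; 1; 0];
  [:: 2; 2; 2; 2; 1; 1; 0; 0; 0; 0; 1; 1];
  [:: 2; 2; 2; 2; 1; 1; 0; 0; 0; 0; 1; 1];
  [:: 2; 2; 2; 2; 1; 2; 0; 2; 0; 0; 1; 1];
  [:: 2; 1; 2; 2; 1; 1; 0; 0; 1; 0; 1; 1];
  [:: 2; 2; 2; 2; 1; 1; 0; 0; 0; 0; 1; 1]].
Definition labL (c : seq nat) (k : nat) : nat := nth 0 (nth [::] tabLabs (index c tabCodes)) k.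
Definition clamp (n : nat) : nat := if n == 0 then 0 else if n == 1 then 1 else 2.
Definition labC (c : seq nat) (k : nat) : nat := clamp (labL c k).
Definition sepL (c1 c2 : seq nat) : nat := count (fun k => labC c1 k != labC c2 k) (iota 0 12).
Definition cpi1 := [:: 1; 0; 3; 2].
Definition cpi2 := [:: 2; 3; 0; 1].
Definition cid := [:: 0; 1; 2; 3].

Definition Qsep (c1 c2 : seq nat) (d : nat) := sepL c1 c2 <= 6 * d.
Definition Qterm (c1 c2 : seq nat) (d : nat) :=
  (c1 \in [:: cpi1; cpi2; cid]) && (c2 \in [:: cpi1; cpi2; cid]) ==>
   (d == (if c1 == c2 then 0 else 2)).
Lemma check_sep : all (fun c1 => all (fun c2 => Qsep c1 (codeMul c1 c2) (4 - cntL c2)) codes24) codes24.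
Proof. by vm_compute. Qed.
Lemma check_term : all (fun c1 => all (fun c2 => Qterm c1 (codeMul c1 c2) (4 - cntL c2)) codes24) codes24.
Proof. by vm_compute. Qed.
Lemma check_pin : all (fun c =>
   [&& all (fun k => labC c k == 0) (iota 0 12) ==> (c == cpi1),
       all (fun k => labC c k == 1) (iota 0 12) ==> (c == cpi2) &
       all (fun k => labC c k == 2) (iota 0 12) ==> (c == cid)]) codes24.
Proof. by vm_compute. Qed.
Lemma check_bd : all (fun k => [&& labC cpi1 k == 0, labC cpi2 k == 1 & labC cid k == 2]) (iota 0 12).
Proof. by vm_compute. Qed.

Section P2.
Local Open Scope group_scope.

Lemma code_val (s : 'S_4) (i : 'I_4) : nth 0 (code s) i = val (s i).
Proof. by rewrite /code (nth_map 0) ?size_iota // nth_iota // add0n inord_val. Qed.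

Lemma code_mul (x t : 'S_4) : code (x * t) = codeMul (code x) (code t).
Proof.
rewrite {1}/code /codeMul; apply/eq_in_map => a; rewrite mem_iota add0n => /andP[_ lt].
have h : val ((x * t) (inord a : 'I_4)) = nth 0 (code t) (nth 0 (code x) a).
  have -> : a = val (Ordinal lt) by [].
  by rewrite inord_val permM !code_val.
exact: h.
Qed.

Lemma code_iter (t : 'S_4) i (x : 'I_4) : iterL i (code t) (val x) = val (iter i t x).
Proof. by elim: i => [//|i IH]; rewrite /iterL /= -/(iterL i _ _) IH code_val. Qed.

Lemma card_porbits (t : 'S_4) : #|porbits t| = cntL (code t).
Proof.
pose R := [set x : 'I_4 | all (fun i => val x <= val (iter i t x)) (iota 0 4)].
have -> : cntL (code t) = #|R|.
  rewrite /cntL -[in X in count _ X]val_enum_ord count_map cardE /enum_mem size_filter -enumT.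
  rewrite count_filter; apply: eq_count => x; by rewrite /= [x \in R]inE /= !code_val !andbT.
have key : forall x y, x \in R -> porbit t x = porbit t y -> val x <= val y.
  move=> x0 y0; rewrite inE => /allP xR exy.
  have : y0 \in porbit t x0 by rewrite exy porbit_id.
  rewrite porbit_traject => /trajectP[i ilt ->].
  apply: xR; rewrite mem_iota /=.
  apply: leq_trans ilt _; apply: leq_trans (max_card _) _; by rewrite card_ord.
have inj : {in R &, injective (porbit t)}.
  by move=> x y xR yR exy; apply: val_inj; apply/eqP; rewrite eqn_leq key //= key.
transitivity #|porbit t @: R|; last exact: card_in_imset inj.
apply: eq_card => O; apply/idP/idP; last first.
  by case/imsetP => x _ ->; apply: imset_f.
case/imsetP => x _ ->.
have xx : x \in porbit t x by apply: porbit_id.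
case: (arg_minnP (fun y : 'I_4 => val y) xx) => y yin ymin.
have eqy : porbit t y = porbit t x by apply/eqP; rewrite eq_porbit_mem.
rewrite -eqy; apply: imset_f.
rewrite inE; apply/allP => i _; apply: ymin; rewrite -eqy -permX; exact: mem_porbit.
Qed.

Lemma dist_mul (x t : 'S_4) : cayley_dist x (x * t) = 4 - cntL (code t).
Proof. by rewrite /cayley_dist mulKg card_porbits. Qed.

Lemma code_in (t : 'S_4) : code t \in codes24.
Proof.
have -> : code t = map val (map t (enum 'I_4)).
  rewrite /code -val_enum_ord -!map_comp; apply: eq_map => i /=; by rewrite inord_val.
rewrite mem_permutations -val_enum_ord.
apply: perm_map; apply: uniq_perm.
- by rewrite map_inj_uniq ?enum_uniq //; apply: perm_inj.
- exact: enum_uniq.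
move=> i; rewrite mem_enum; apply/mapP; exists (t^-1 i); first by rewrite mem_enum.
by rewrite permKV.
Qed.

Lemma code_inj (x y : 'S_4) : code x = code y -> x = y.
Proof. by move=> h; apply/permP => i; apply: val_inj; rewrite -!code_val h. Qed.

Lemma dist_prop (Q : seq nat -> seq nat -> nat -> bool) :
  all (fun c1 => all (fun c2 => Q c1 (codeMul c1 c2) (4 - cntL c2)) codes24) codes24 ->
  forall x y, Q (code x) (code y) (cayley_dist x y).
Proof.
move=> H x y; have -> : y = x * (x^-1 * y) by rewrite mulKVg.
rewrite code_mul dist_mul.
by move/allP: H => /(_ _ (code_in x)) /allP /(_ _ (code_in (x^-1 * y))).
Qed.

Lemma inord_eq (a b : nat) : a < 4 -> b < 4 -> ((inord a : 'I_4) == inord b) = (a == b).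
Proof. by move=> ha hb; rewrite -val_eqE /= !inordK. Qed.

Lemma code_pi1 : code pi1 = cpi1.
Proof. by rewrite /code /pi1 /= !permM !permE /= !inord_eq //= !inordK. Qed.
Lemma code_pi2 : code pi2 = cpi2.
Proof. by rewrite /code /pi2 /= !permM !permE /= !inord_eq //= !inordK. Qed.
Lemma code_id : code 1 = cid.
Proof. by rewrite /code /= !perm1 !inordK. Qed.

End P2.


Section G.
Variables (V Edg : finType) (src tgt : Edg -> V).

Definition Pset (f : V -> nat) (i : nat) : {set V} := [set v | f v == i].

Lemma cut_f (f : V -> nat) : (forall v, f v < 3) ->
  cut_edges src tgt (Pset f 0) (Pset f 1) (Pset f 2) = [set e | f (src e) != f (tgt e)].
Proof.
move=> hf; apply/setP => e; rewrite !inE.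
move: (hf (src e)) (hf (tgt e)).
by case: (f (src e)) => [|[|[|?]]] //; case: (f (tgt e)) => [|[|[|?]]].
Qed.

Lemma card_setn (P : pred Edg) : #|[set e | P e]| = \sum_e (P e : nat).
Proof. by rewrite -sum1dep_card big_mkcond /=; apply: eq_bigr => e _; case: (P e). Qed.

Lemma trip_f (A B C : {set V}) (f : V -> nat) : (forall v, f v < 3) ->
  (forall v, v \in A -> f v = 0) -> (forall v, v \in B -> f v = 1) ->
  (forall v, v \in C -> f v = 2) ->
  is_tripartition A B C (Pset f 0) (Pset f 1) (Pset f 2).
Proof.
move=> hf fA fB fC; split.
- by rewrite disjoint_subset; apply/subsetP => v; rewrite !inE => /eqP->.
- by rewrite disjoint_subset; apply/subsetP => v; rewrite !inE => /eqP->.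
- by rewrite disjoint_subset; apply/subsetP => v; rewrite !inE => /eqP->.
- apply/setP => v; rewrite !inE; move: (hf v); by case: (f v) => [|[|[|?]]].
split; apply/setP => v; rewrite !inE; apply/idP/idP.
- case/andP => /orP[/orP[//|vB]|vC]; by rewrite ?(fB _ vB) ?(fC _ vC).
- by move=> vA; rewrite vA (fA _ vA).
- case/andP => /orP[/orP[vA|//]|vC]; by rewrite ?(fA _ vA) ?(fC _ vC).
- by move=> vB; rewrite vB orbT (fB _ vB).
- case/andP => /orP[/orP[vA|vB]|//]; by rewrite ?(fA _ vA) ?(fB _ vB).
- by move=> vC; rewrite vC orbT (fC _ vC).
Qed.

Definition gidx (GA GB : {set V}) (v : V) : nat :=
  if v \in GA then 0 else if v \in GB then 1 else 2.

Lemma gidx_P (A B C GA GB GC : {set V}) : is_tripartition A B C GA GB GC ->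
  [/\ Pset (gidx GA GB) 0 = GA, Pset (gidx GA GB) 1 = GB & Pset (gidx GA GB) 2 = GC].
Proof.
case=> dab dac dbc cov _.
have cv : forall v, [|| v \in GA, v \in GB | v \in GC].
  by move=> v; move/setP: cov => /(_ v); rewrite !inE orbA.
split; apply/setP => v; rewrite !inE /gidx.
- by case: (v \in GA); case: (v \in GB).
- case: ifP => vA; last by case: (v \in GB).
  by apply/esym; apply: (disjointFr dab vA).
- case: ifP => vA.
    by apply/esym; apply: (disjointFr dac vA).
  case: ifP => vB; first by apply/esym; apply: (disjointFr dbc vB).
  by move: (cv v); rewrite vA vB.
Qed.
End G.


Theorem mainTheorem6 (V Edg : finType) (src tgt : Edg -> V)
  (no_loops : forall e, src e != tgt e)
  (A B C : {set V})
  (dAB : [disjoint A & B]) (dAC : [disjoint A & C]) (dBC : [disjoint B & C])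
  (pi : V -> 'S_4)
  (hA : forall v, v \in A -> pi v = pi1)
  (hB : forall v, v \in B -> pi v = pi2)
  (hC : forall v, v \in C -> pi v = 1%g)
  (GA GB GC : {set V})
  (hmin : minimal_tripartition src tgt A B C GA GB GC) :
  (2 * cut_size src tgt GA GB GC <= energy src tgt pi)%N /\
  ((forall GA' GB' GC', minimal_tripartition src tgt A B C GA' GB' GC' ->
      [/\ GA' = GA, GB' = GB & GC' = GC]) ->
   (energy src tgt pi = (2 * cut_size src tgt GA GB GC)%N <->
    [/\ forall v, v \in GA -> pi v = pi1,
        forall v, v \in GB -> pi v = pi2
      & forall v, v \in GC -> pi v = 1%g])).
Proof.
case: hmin => trip hminle.
set m := cut_size src tgt GA GB GC.
set E := energy src tgt pi.
pose f k v := labC (code (pi v)) k.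
have fb : forall k v, f k v < 3.
  by move=> k v; rewrite /f /labC /clamp; case: ifP => //; case: ifP.
have ik : forall k, k < 12 -> k \in iota 0 12 by move=> k hk; rewrite mem_iota.
have tripk : forall k, k < 12 ->
    is_tripartition A B C (Pset (f k) 0) (Pset (f k) 1) (Pset (f k) 2).
  move=> k hk; case/and3P: (allP check_bd k (ik k hk)) => /eqP h1 /eqP h2 /eqP h3.
  apply: trip_f; first exact: fb.
  - by move=> v hv; rewrite /f (hA v hv) code_pi1.
  - by move=> v hv; rewrite /f (hB v hv) code_pi2.
  - by move=> v hv; rewrite /f (hC v hv) code_id.
pose cutk k := cut_size src tgt (Pset (f k) 0) (Pset (f k) 1) (Pset (f k) 2).
have cutkE : forall k, cutk k = \sum_e (f k (src e) != f k (tgt e) : nat).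
  by move=> k; rewrite /cutk /cut_size cut_f // card_setn.
have sepb : forall e, \sum_(0 <= k < 12) (f k (src e) != f k (tgt e) : nat)
                      <= 6 * cayley_dist (pi (src e)) (pi (tgt e)).
  move=> e.
  have := @dist_prop Qsep check_sep (pi (src e)) (pi (tgt e)).
  rewrite /Qsep; apply: leq_trans; rewrite /sepL -sum1_count [X in _ <= X]big_mkcond.
  by apply: eq_leq; apply: eq_bigr => k _; case: (_ != _).
have sumcut : \sum_(0 <= k < 12) cutk k <= 6 * E.
  rewrite (eq_bigr _ (fun k _ => cutkE k)) exchange_big /E /energy big_distrr /=.
  by apply: leq_sum => e _; exact: sepb.
have lowk : forall k, k < 12 -> m <= cutk k.
  by move=> k hk; apply: hminle; apply: tripk.
have low : 12 * m <= \sum_(0 <= k < 12) cutk k.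
  have -> : 12 * m = \sum_(0 <= k < 12) m by rewrite sum_nat_const_nat.
  rewrite big_nat_cond [X in _ <= X]big_nat_cond.
  by apply: leq_sum => k /andP[/andP[_ hk] _]; exact: lowk.
split.
  rewrite -(leq_pmul2l (isT : 0 < 6)) mulnA; exact: leq_trans low sumcut.
move=> hu.
have [g0 g1 g2] := gidx_P trip.
pose g := gidx GA GB.
have cv : forall v, [|| v \in GA, v \in GB | v \in GC].
  by case: trip => _ _ _ cov _ v; move/setP: cov => /(_ v); rewrite !inE orbA.
split.
  move=> hE.
  have eqk : forall k, k < 12 -> cutk k = m.
    have hs : \sum_(0 <= k < 12) (cutk k - m) == 0.
      have hsplit : \sum_(0 <= k < 12) cutk k = 12 * m + \sum_(0 <= k < 12) (cutk k - m).
        rewrite -[12 * m]/((12 - 0) * m) -sum_nat_const_nat -big_split.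
        by apply: eq_big_nat => k /andP[_ hk]; rewrite /= subnKC // lowk.
      have := sumcut; rewrite hE hsplit mulnA -[X in _ <= X]addn0 leq_add2l leqn0.
      by [].
    move=> k hk; move: hs; rewrite sum_nat_seq_eq0 => /allP /(_ k).
    rewrite mem_index_iota hk => /(_ isT) /=; rewrite subn_eq0 => h.
    by apply/eqP; rewrite eqn_leq h lowk.
  have Pk : forall k, k < 12 ->
      [/\ Pset (f k) 0 = GA, Pset (f k) 1 = GB & Pset (f k) 2 = GC].
    move=> k hk; apply: hu; split; first exact: tripk.
    move=> GA' GB' GC' t'; rewrite -/(cutk k) (eqk k hk); exact: hminle.
  have X := allP check_pin.
  split => v hv; move: (X (code (pi v)) (code_in (pi v))) => /and3P[h0 h1 h2].
  - apply: code_inj; rewrite code_pi1; apply/eqP; apply: (implyP h0).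
    apply/allP => k; rewrite mem_iota add0n => /andP[_ hk]; have [P0 _ _] := Pk k hk.
    by move: hv; rewrite -P0 inE => h; exact: h.
  - apply: code_inj; rewrite code_pi2; apply/eqP; apply: (implyP h1).
    apply/allP => k; rewrite mem_iota add0n => /andP[_ hk]; have [_ P1 _] := Pk k hk.
    by move: hv; rewrite -P1 inE => h; exact: h.
  - apply: code_inj; rewrite code_id; apply/eqP; apply: (implyP h2).
    apply/allP => k; rewrite mem_iota add0n => /andP[_ hk]; have [_ _ P2] := Pk k hk.
    by move: hv; rewrite -P2 inE => h; exact: h.
case=> pA pB pC.
have gb : forall v, gidx GA GB v < 3.
  by move=> v; rewrite /gidx; case: ifP => //; case: ifP.
have hm : m = #|[set e | gidx GA GB (src e) != gidx GA GB (tgt e)]|.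
  by rewrite /m -(cut_f src tgt gb) g0 g1 g2.
have hc : forall v, code (pi v) = nth [::] [:: cpi1; cpi2; cid] (gidx GA GB v).
  move=> v; rewrite /gidx; case: ifP => vA; first by rewrite (pA v vA) code_pi1.
  case: ifP => vB; first by rewrite (pB v vB) code_pi2.
  by rewrite pC ?code_id //; move: (cv v); rewrite vA vB.
have hd : forall e, cayley_dist (pi (src e)) (pi (tgt e))
                    = 2 * (gidx GA GB (src e) != gidx GA GB (tgt e)).
  move=> e; have := @dist_prop Qterm check_term (pi (src e)) (pi (tgt e)).
  rewrite /Qterm !hc; move: (gb (src e)) (gb (tgt e)).
  case: (gidx GA GB (src e)) => [|[|[|?]]] //; case: (gidx GA GB (tgt e)) => [|[|[|?]]] // _ _ /= /eqP -> //.
rewrite /E /energy (eq_bigr _ (fun e _ => hd e)) -big_distrr /= hm card_setn.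


by [].
Qed.
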